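(* Any quadric which vanishes on $W_d$ is a linear combination of elements of $\mathcal{D}$.
   Context: Let $P_d$ be a convex polygon with $d\ge 4$ vertices $v_1,\dots,v_d$ (indices mod $d$) over a field $\mathbb{K}$ with no three edge lines concurrent. With ${\bf v}_i=(v_i,1)$, $\alpha_j=|{\bf v}_{j-1}\,{\bf v}_j\,{\bf v}_{j+1}|$, $\ell_j=|{\bf v}_j\,{\bf v}_{j+1}\,{\bf p}|$, ${\bf p}=(x,y,z)$, $b_i=\alpha_i\prod_{j\ne i-1,i}\ell_j$, the Wachspress surface $W_d\subseteq\mathbb{P}^{d-1}$ is the closure of the image of $p\mapsto(b_1,\dots,b_d)$. In $S=\mathbb{K}[x_1,\ldots,x_d]$, a diagonal monomial is $x_ix_j$ with $j\notin\{i-1,i,i+1\}$, and $\mathcal{D}\subseteq S_2$ is the span of the diagonal monomials. *)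

(* Defs.v *)
From HB Require Import structures.
From mathcomp Require Import all_boot all_order all_algebra.
From mathcomp Require Import mpoly.
Set Implicit Arguments. Unset Strict Implicit. Unset Printing Implicit Defensive.
Import Order.TTheory GRing.Theory Num.Theory.
Local Open Scope ring_scope.

Definition det3 (T : comNzRingType) (a b c : 'I_3 -> T) : T :=
  \det (\matrix_(r < 3, k < 3)
          (if r == 0 :> nat then a k else if r == 1 :> nat then b k else c k)).

Section Wachspress.
Variables (R : realFieldType) (d : nat) (v : 'I_d -> R * R).

Definition vhom (i : 'I_d) : 'I_3 -> R :=
  fun k => [:: (v i).1; (v i).2; 1]`_k.

Definition walpha (j : 'I_d) : R :=
  det3 (vhom (ord_pred j)) (vhom j) (vhom (ordS j)).

Definition well (j : 'I_d) : {mpoly R[3]} :=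
  det3 (fun k => (vhom j k)%:MP) (fun k => (vhom (ordS j) k)%:MP)
       (fun k => 'X_k).

Definition wb (i : 'I_d) : {mpoly R[3]} :=
  walpha i *: \prod_(j : 'I_d | (j != ord_pred i) && (j != i)) well j.

(* x_i x_j is a diagonal monomial iff j not in {i-1, i, i+1} (mod d) *)
Definition diagonal_pair (i j : 'I_d) : bool :=
  [&& j != ord_pred i, j != i & j != ordS i].

(* P_d is a (strictly) convex polygon with vertices v_1..v_d listed in cyclic
   order (either orientation): all other vertices lie strictly on one
   common side of each edge line. *)
Definition convex_polygon : Prop :=
  (forall i j : 'I_d, j != i -> j != ordS i ->
     0 < det3 (vhom i) (vhom (ordS i)) (vhom j)) \/
  (forall i j : 'I_d, j != i -> j != ordS i ->
     det3 (vhom i) (vhom (ordS i)) (vhom j) < 0).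

Definition no_three_edge_lines_concurrent : Prop :=
  forall i j k : 'I_d, i != j -> j != k -> i != k ->
    forall p : 'I_3 -> R, (exists k, p k != 0) ->
      ~ [/\ (well i).@[p] = 0, (well j).@[p] = 0 & (well k).@[p] = 0].

(* The quadric q vanishes on W_d: it vanishes at every point of the image of
   p |-> (b_1(p) : ... : b_d(p)) (equivalently on its Zariski closure). *)
Definition vanishes_on_W (q : {mpoly R[d]}) : Prop :=
  forall p : 'I_3 -> R, (exists i, (wb i).@[p] != 0) ->
    q.@[fun i => (wb i).@[p]] = 0.

Definition in_diag_span (q : {mpoly R[d]}) : Prop :=
  exists c : 'I_d -> 'I_d -> R,
    q = \sum_(i : 'I_d) \sum_(j : 'I_d | diagonal_pair i j)
          c i j *: ('X_i * 'X_j).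

End Wachspress.

(* Main.v *)
Require Import Defs.
From HB Require Import structures.
From mathcomp Require Import all_boot all_order all_algebra.
From mathcomp Require Import mpoly.
From mathcomp Require Import ring lra zify.
Import Order.TTheory GRing.Theory Num.Theory.
Local Open Scope ring_scope.

Lemma liftE m (i : 'I_m.+1) (j : 'I_m) : lift i j = inord (bump i j).
Proof. by apply: val_inj; rewrite /= inordK // (ltn_ord (lift i j)). Qed.

Lemma det3E (T : comNzRingType) (a b c : 'I_3 -> T) :
  det3 a b c = a (inord 0) * (b (inord 1) * c (inord 2) - b (inord 2) * c (inord 1))
             - a (inord 1) * (b (inord 0) * c (inord 2) - b (inord 2) * c (inord 0))
             + a (inord 2) * (b (inord 0) * c (inord 1) - b (inord 1) * c (inord 0)).
Proof.
rewrite /det3 (expand_det_row _ ord0) !big_ord_recl big_ord0 /cofactor.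
rewrite !(expand_det_row _ ord0) !big_ord_recl !big_ord0 /cofactor !det_mx11.
rewrite !mxE /= !liftE /bump /= !addn0 !add0n.
have -> : (ord0 : 'I_3) = inord 0 by apply: val_inj; rewrite /= inordK.
do ?rewrite inordK //=.
rewrite -[(1+1)%N]/2%N -[(1+0)%N]/1%N -[(0+1)%N]/1%N -[(0+0)%N]/0%N; ring.
Qed.

Lemma det3_add (T : comNzRingType) (a b c1 c2 : 'I_3 -> T) :
  det3 a b (fun k => c1 k + c2 k) = det3 a b c1 + det3 a b c2.
Proof. rewrite !det3E; ring. Qed.

Lemma det3_aba (T : comNzRingType) (a b : 'I_3 -> T) : det3 a b a = 0.
Proof. rewrite !det3E; ring. Qed.

Lemma det3_abb (T : comNzRingType) (a b : 'I_3 -> T) : det3 a b b = 0.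
Proof. rewrite !det3E; ring. Qed.

Lemma well_eval (R : realFieldType) d (v : 'I_d -> R * R) j p :
  (well v j).@[p] = det3 (vhom v j) (vhom v (ordS j)) p.
Proof.
rewrite /well !det3E.
by rewrite !rmorphD !rmorphN !rmorphM /= !rmorphB /= !rmorphM /= !mevalC !mevalXU.
Qed.

Lemma wb_eval (R : realFieldType) d (v : 'I_d -> R * R) i p :
  (wb v i).@[p] = walpha v i *
     \prod_(j : 'I_d | (j != ord_pred i) && (j != i)) det3 (vhom v j) (vhom v (ordS j)) p.
Proof.
rewrite /wb mevalZ rmorph_prod; congr (_ * _); apply: eq_bigr => j _.
exact: well_eval.
Qed.

Lemma ordS_neq d (i : 'I_d) : (1 < d)%N -> ordS i != i.
Proof.
move=> hd; apply/eqP => /(congr1 val) /=.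
move: (ltn_ord i); move: (nat_of_ord i) => n hn.
case: (ltngtP n.+1 d) => [h|h|h].
- by rewrite modn_small // => h'; lia.
- by move: (leq_trans h hn); rewrite ltnn.
- by rewrite h modnn => h0; move: hd; rewrite -h -h0.
Qed.

Lemma ordSS_neq d (i : 'I_d) : (2 < d)%N -> ordS (ordS i) != i.
Proof.
move=> hd; apply/eqP => /(congr1 val) /=.
move: (ltn_ord i); move: (nat_of_ord i) => n hn.
case: (ltngtP n.+1 d) => [h|h|h].
- rewrite (modn_small h); case: (ltngtP n.+2 d) => [h2|h2|h2].
  + by rewrite modn_small // => h'; lia.
  + by move: (leq_trans h2 h); rewrite ltnn.
  + by rewrite h2 modnn => n0; move: hd; rewrite -h2 -n0.
- by move: (leq_trans h hn); rewrite ltnn.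
- rewrite h modnn /= => n1; rewrite (modn_small) in n1; lia.
Qed.

Lemma sum_one (T : finType) (M : nmodType) (F : T -> M) a :
  (forall i, i != a -> F i = 0) -> \sum_i F i = F a.
Proof. by move=> h; rewrite (bigD1 a) //= big1 ?addr0 // => i /h. Qed.

Lemma sum_two (T : finType) (M : nmodType) (F : T -> M) a b : a != b ->
  (forall i, i != a -> i != b -> F i = 0) -> \sum_i F i = F a + F b.
Proof.
move=> ab h; rewrite (bigD1 a) //= (bigD1 b) 1?eq_sym //= big1 ?addr0 // => i /andP[ia ib].
exact: h.
Qed.
Lemma mdeg2 n (m : 'X_{1..n}) : mdeg m = 2%N -> exists a b, m = (U_(a) + U_(b))%MM.
Proof.
move=> hm.
have [a ha] : exists a, (0 < m a)%N.
  apply/existsP; apply: contraT; rewrite negb_exists => /forallP H.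
  move: hm; rewrite mdegE big1 // => i _; move: (H i); rewrite lt0n negbK => /eqP.
  done.
have E : m = (U_(a) + (m - U_(a)))%MM.
  apply/mnmP => i; rewrite mnmDE mnmBE mnm1E.
  by case: eqP => [<-|_]; [rewrite add1n subn1 prednK | rewrite add0n subn0].
have : mdeg (m - U_(a))%MM == 1%N.
  by have := mdegD U_(a) (m - U_(a))%MM; rewrite -E hm mdeg1 add1n => -[<-].
case/mdeg1P => b /eqP hb; exists a, b; by rewrite E hb.
Qed.

Lemma U2_inj n (i j a b : 'I_n) : (U_(i) + U_(j) = U_(a) + U_(b))%MM ->
  (i = a /\ j = b) \/ (i = b /\ j = a).
Proof.
move=> E.
have Hi := congr1 (fun m : 'X_{1..n} => m i) E; rewrite /= !mnmDE !mnm1E eqxx in Hi.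
have cancel_l : forall x y z : 'I_n, (U_(x) + U_(y) = U_(x) + U_(z))%MM -> y = z.
  move=> x y z /addmI /eqP; rewrite eq_mnm1 => /eqP //.
case: (eqVneq a i) => [ai|ai].
  by left; split=> //; apply: (cancel_l i); rewrite E ai.
case: (eqVneq b i) Hi => [bi|bi] Hi; last by move: Hi; rewrite (negbTE ai).
right; split; first by rewrite bi.
by apply: (cancel_l i); rewrite E bi addmC.
Qed.

Definition cc {R : nzRingType} {n : nat} (q : {mpoly R[n]}) (i j : 'I_n) : R :=
  if (i <= j)%N then q@_(U_(i) + U_(j))%MM else 0.

Lemma decomp (R : comNzRingType) n (q : {mpoly R[n]}) : q \is 2.-homog ->
  q = \sum_i \sum_j cc q i j *: ('X_i * 'X_j).
Proof.
move=> hq; apply/mpolyP => m.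
rewrite raddf_sum /=.
under eq_bigr => i _ do rewrite raddf_sum /=.
under eq_bigr => i _ do under eq_bigr => j _ do rewrite mcoeffZ -mpolyXD mcoeffX.
case: (eqVneq (mdeg m) 2%N) => hm; last first.
  rewrite (dhomog_nemf_coeff hq hm) big1 // => i _; rewrite big1 // => j _.
  case: eqP => [E|_]; last by rewrite mulr0.
  by move: hm; rewrite -E mdegD !mdeg1 eqxx.
have [a [b ->]] := @mdeg2 n m hm.
wlog ab : a b / (a <= b)%N.
  move=> W; case: (leqP a b) => [|/ltnW] h; first exact: W.
  by rewrite addmC; apply: W.
rewrite (@sum_one _ _ _ a) => [|i ia]; last first.
  rewrite big1 // => j _; case: eqP => [/U2_inj [[ia' _]|[ib ja]]|_]; last by rewrite mulr0.
  - by rewrite ia' eqxx in ia.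
  - rewrite /cc ib ja; case: (ltngtP a b) ab => // [ltab|eqab] _.
    + by rewrite mul0r.
    + have ba : b = a by apply/eqP; rewrite -val_eqE /= eqab.
      by move: ia; rewrite ib ba eqxx.
rewrite (@sum_one _ _ _ b) => [|j jb]; last first.
  case: eqP => [/U2_inj [[_ jb']|[ab' ja]]|_]; last by rewrite mulr0.
  - by rewrite jb' eqxx in jb.
  - by move: jb; rewrite ja ab' eqxx.
rewrite eqxx mulr1 /cc; by case: ifP => //; rewrite ab.
Qed.

Lemma evalq (R : comNzRingType) n (q : {mpoly R[n]}) x : q \is 2.-homog ->
  q.@[x] = \sum_i \sum_j cc q i j * (x i * x j).
Proof.
move=> hq; rewrite {1}(@decomp _ _ q hq) rmorph_sum; apply: eq_bigr => i _.
rewrite rmorph_sum; apply: eq_bigr => j _.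
change (meval x (cc q i j *: ('X_i * 'X_j)) = cc q i j * (x i * x j)); by rewrite mevalZ mevalM !mevalXU.
Qed.

Theorem lemma3p1 (R : realFieldType) (d : nat) (v : 'I_d -> R * R)
  (hd : (4 <= d)%N)
  (hconv : convex_polygon v)
  (hconc : no_three_edge_lines_concurrent v)
  (q : {mpoly R[d]}) (hq : q \is 2.-homog)
  (hvan : vanishes_on_W v q) :
  in_diag_span q.
Proof.
have d3 : (2 < d)%N by apply: leq_trans hd.
have d1 : (1 < d)%N by apply: leq_trans d3.
pose D i j t := det3 (vhom v i) (vhom v j) (vhom v t).
have [s [s0 hs]] : exists s : R, s != 0 /\
    forall i j, j != i -> j != ordS i -> 0 < s * D i (ordS i) j.
  case: hconv => H; [exists 1 | exists (-1)]; split.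
  - exact: oner_neq0.
  - by move=> i j h1 h2; rewrite mul1r; exact: H.
  - by rewrite oppr_eq0 oner_neq0.
  - by move=> i j h1 h2; rewrite mulN1r oppr_gt0; exact: H.
have hs0 : forall i t, 0 <= s * D i (ordS i) t.
  move=> i t; case: (eqVneq t i) => [->|ti]; first by rewrite /D det3_aba mulr0.
  case: (eqVneq t (ordS i)) => [->|tsi]; first by rewrite /D det3_abb mulr0.
  exact/ltW/hs.
have Dnz : forall i j, j != i -> j != ordS i -> D i (ordS i) j != 0.
  by move=> i j h1 h2; apply/eqP => h; move: (hs i j h1 h2); rewrite h mulr0 ltxx.
have nS : forall i : 'I_d, ordS i != i := fun i => ordS_neq _ i d1.
have nSS : forall i : 'I_d, ordS (ordS i) != i := fun i => ordSS_neq _ i d3.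
have nP : forall i : 'I_d, ord_pred i != i.
  by move=> i; apply/eqP => h; move: (nS i); rewrite -{1}h ord_predK eqxx.
have nPS : forall i : 'I_d, ord_pred i != ordS i.
  move=> i; apply/eqP => h; move: (nSS i).
  by rewrite -h ord_predK eqxx.
have anz : forall i, walpha v i != 0.
  move=> i; rewrite /walpha -{2}(ord_predK i); apply: Dnz.
    by rewrite eq_sym nPS.
  by rewrite ord_predK nS.
have prod0 : forall (F : 'I_d -> R) (Pr : pred 'I_d) j0, Pr j0 -> F j0 = 0 ->
    \prod_(j | Pr j) F j = 0.
  by move=> F Pr j0 h1 h2; rewrite (bigD1 j0) //= h2 mul0r.
have SP : forall i j : 'I_d, (ordS j == i) = (j == ord_pred i).
  move=> i j; apply/eqP/eqP => [<-|->]; [by rewrite ordSK | by rewrite ord_predK].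
have hA : forall k, cc q k k = 0.
  move=> k; pose x i := (wb v i).@[vhom v k].
  have xk : x k != 0.
    rewrite /x wb_eval mulf_neq0 //; apply/prodf_neq0 => j /andP[j1 j2].
    by apply: Dnz; rewrite 1?eq_sym // SP.
  have x0 : forall i, i != k -> x i = 0.
    move=> i ik; rewrite /x wb_eval.
    case: (eqVneq k (ord_pred i)) => [kP|kP].
      rewrite (prod0 _ _ (ord_pred k)) ?mulr0 //.
        rewrite kP nP /= -kP; apply/eqP => h; move: (nPS k).
        by rewrite h kP ord_predK eqxx.
      by rewrite ord_predK det3_abb.
    by rewrite (prod0 _ _ k) ?mulr0 ?kP ?det3_aba // eq_sym ik.
  have hv : q.@[x] = 0 := hvan (vhom v k) (ex_intro _ k xk).
  move: hv.
  rewrite (@evalq _ _ q _ hq) (@sum_one _ _ _ k) => [|i ik]; last first.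
    by rewrite big1 // => j _; rewrite (x0 i ik) mul0r mulr0.
  rewrite (@sum_one _ _ _ k) => [|j jk]; last by rewrite (x0 j jk) mulr0 mulr0.
  by move/eqP; rewrite mulf_eq0 mulf_eq0 orbb (negbTE xk) orbF => /eqP.
have hB : forall k, q@_(U_(k) + U_(ordS k))%MM = 0.
  move=> k; set k1 := ordS k.
  pose p t := vhom v k t + vhom v k1 t.
  have ellp : forall j, det3 (vhom v j) (vhom v (ordS j)) p = D j (ordS j) k + D j (ordS j) k1.
    by move=> j; rewrite det3_add.
  have snz : forall a b, 0 < s * a -> 0 <= s * b -> a + b != 0.
    move=> a b h1 h2; apply/eqP => h.
    have : 0 < s * a + s * b by lra.
    by rewrite -mulrDr h mulr0 ltxx.
  pose x i := (wb v i).@[p].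
  have xk : x k != 0.
    rewrite /x wb_eval mulf_neq0 //; apply/prodf_neq0 => j /andP[j1 j2].
    rewrite ellp; apply: snz => //; apply: hs; by rewrite 1?eq_sym // SP.
  have xk1 : x k1 != 0.
    rewrite /x wb_eval mulf_neq0 //; apply/prodf_neq0 => j /andP[j1 j2].
    rewrite ellp addrC; apply: snz => //; apply: hs.
      by rewrite eq_sym.
    by rewrite /k1 (inj_eq (@ordS_inj d)) eq_sym; move: j1; rewrite /k1 ordSK.
  have kk1 : k != k1 by rewrite eq_sym nS.
  have x0 : forall i, i != k -> i != k1 -> x i = 0.
    move=> i ik ik1; rewrite /x wb_eval.
    rewrite (prod0 _ _ k) ?mulr0 //.
      by rewrite [k == i]eq_sym ik andbT -SP eq_sym ik1.
    by rewrite ellp /D /k1 det3_aba det3_abb addr0.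
  have hv : q.@[x] = 0 := hvan p (ex_intro _ k xk).
  move: hv.
  rewrite (@evalq _ _ q _ hq) (@sum_two _ _ _ k k1) // => [|i ik ik1]; last first.
    by rewrite big1 // => j _; rewrite (x0 i ik ik1) mul0r mulr0.
  rewrite (@sum_two _ _ _ k k1) // => [|j jk jk1]; last by rewrite (x0 j jk jk1) mulr0 mulr0.
  rewrite (@sum_two _ _ _ k k1) // => [|j jk jk1]; last by rewrite (x0 j jk jk1) mulr0 mulr0.
  rewrite !hA !mul0r add0r addr0 [x k1 * x k]mulrC -mulrDl => /eqP.
  rewrite mulf_eq0 mulf_eq0 (negbTE xk) (negbTE xk1) !orbF => /eqP.
  rewrite /cc; case: (ltngtP k k1) => [lt|gt|eq].
  - by rewrite addr0.
  - by rewrite add0r addmC.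
  - by move/val_inj: eq kk1 => ->; rewrite eqxx.
exists (cc q); rewrite {1}(@decomp _ _ q hq); apply: eq_bigr => i _.
rewrite [RHS]big_mkcond /=; apply: eq_bigr => j _.
case: ifP => // /negbT; rewrite /diagonal_pair !negb_and !negbK => H.
suff -> : cc q i j = 0 by rewrite scale0r.
case/or3P: H => /eqP ->.
- rewrite /cc; case: ifP => // _; rewrite addmC; by have := hB (ord_pred i); rewrite ord_predK.
- exact: hA.
- by rewrite /cc; case: ifP => // _; rewrite hB.
Qed.
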